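(* Let $(X,d)$ be a compact metric space and $f_{1,\infty}=\{f_n\}_{n=1}^\infty$ a sequence of continuous self-maps of $X$. If the induced non-autonomous system $(\mathcal{M}(X),\widetilde{f}_{1,\infty})$ is topologically transitive, then $(X,f_{1,\infty})$ satisfies Banks's condition.
   Context: For a sequence $f_{1,\infty}=\{f_n\}_{n\ge1}$ of continuous self-maps of $X$, write $f_1^n=f_n\circ\cdots\circ f_1$ and $f_1^{-n}=(f_1^n)^{-1}$ (preimage). $\mathcal{M}(X)$ is the space of Borel probability measures on $X$ with the weak$^*$ topology (equivalently the Prohorov metric), and the induced system $(\mathcal{M}(X),\widetilde{f}_{1,\infty})$ is given by $\widetilde{f}_1^n(\mu)(A)=\mu(f_1^{-n}(A))$ for Borel $A$ (push-forward). A non-autonomous system $(Y,g_{1,\infty})$ is topologically transitive if for every pair of non-empty open sets $U,V$ there is $n\in\mathbb{N}$ with $g_1^n(U)\cap V\ne\emptyset$. $(X,f_{1,\infty})$ satisfies Banks's condition if for any three non-empty open sets $U,V,W\subseteq X$ there is $n\in\mathbb{N}$ with $f_1^n(U)\cap V\neq\emptyset$ and $f_1^n(U)\cap W\ne\emptyset$. *)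

(* Defs.v *)
From Stdlib Require Import Reals List.
Open Scope R_scope.

Section Defs.
Variable X : Type.
Variable d : X -> X -> R.

Definition is_metric : Prop :=
  (forall x y, 0 <= d x y) /\ (forall x y, d x y = 0 <-> x = y) /\
  (forall x y, d x y = d y x) /\ (forall x y z, d x z <= d x y + d y z).

Definition open_set (U : X -> Prop) : Prop :=
  forall x, U x -> exists eps, 0 < eps /\ forall y, d x y < eps -> U y.

Definition compact_space : Prop :=
  forall (I : Type) (U : I -> X -> Prop),
    (forall i, open_set (U i)) -> (forall x, exists i, U i x) ->
    exists l : list I, forall x, exists i, In i l /\ U i x.

Definition continuous_map (f : X -> X) : Prop :=
  forall x eps, 0 < eps -> exists delta, 0 < delta /\
    forall y, d x y < delta -> d (f x) (f y) < eps.

Definition is_sigma_algebra (S : (X -> Prop) -> Prop) : Prop :=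
  S (fun _ => True) /\
  (forall A, S A -> S (fun x => ~ A x)) /\
  (forall A : nat -> X -> Prop, (forall n, S (A n)) -> S (fun x => exists n, A n x)).

Definition borel (A : X -> Prop) : Prop :=
  forall S, is_sigma_algebra S -> (forall U, open_set U -> S U) -> S A.

(* a Borel probability measure, as a set function read on Borel sets *)
Definition is_prob_measure (m : (X -> Prop) -> R) : Prop :=
  (forall A, borel A -> 0 <= m A) /\
  m (fun _ => True) = 1 /\
  (forall A : nat -> X -> Prop,
     (forall n, borel (A n)) ->
     (forall i j x, i <> j -> A i x -> A j x -> False) ->
     infinite_sum (fun n => m (A n)) (m (fun x => exists n, A n x))).

Definition nbhd (A : X -> Prop) (eps : R) : X -> Prop :=
  fun x => exists a, A a /\ d x a < eps.

(* eps is admissible in the infimum defining the Prohorov metric *)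
Definition prohorov_adm (m1 m2 : (X -> Prop) -> R) (eps : R) : Prop :=
  0 < eps /\ forall A, borel A ->
    m1 A <= m2 (nbhd A eps) + eps /\ m2 A <= m1 (nbhd A eps) + eps.

(* Prohorov distance (an infimum) is < r iff some admissible eps is < r *)
Definition prohorov_lt (m1 m2 : (X -> Prop) -> R) (r : R) : Prop :=
  exists eps, prohorov_adm m1 m2 eps /\ eps < r.

Definition open_M (U : ((X -> Prop) -> R) -> Prop) : Prop :=
  forall m, is_prob_measure m -> U m ->
    exists r, 0 < r /\ forall m', is_prob_measure m' -> prohorov_lt m m' r -> U m'.

Definition nonempty_M (U : ((X -> Prop) -> R) -> Prop) : Prop :=
  exists m, is_prob_measure m /\ U m.

Definition push (g : X -> X) (m : (X -> Prop) -> R) : (X -> Prop) -> R :=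
  fun A => m (fun x => A (g x)).

(* f_1^n = f_n o ... o f_1 (f 0 is unused; f_1^0 = id) *)
Fixpoint comp_seq (f : nat -> X -> X) (n : nat) (x : X) : X :=
  match n with
  | O => x
  | S k => f (S k) (comp_seq f k x)
  end.

Definition induced_transitive (f : nat -> X -> X) : Prop :=
  forall U V, open_M U -> open_M V -> nonempty_M U -> nonempty_M V ->
    exists n, (1 <= n)%nat /\
      exists m, is_prob_measure m /\ U m /\ V (push (comp_seq f n) m).

Definition banks_condition (f : nat -> X -> X) : Prop :=
  forall U V W, open_set U -> open_set V -> open_set W ->
    (exists x, U x) -> (exists x, V x) -> (exists x, W x) ->
    exists n, (1 <= n)%nat /\
      (exists x, U x /\ V (comp_seq f n x)) /\
      (exists x, U x /\ W (comp_seq f n x)).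

End Defs.

(* Main.v *)
Require Import Defs.
From Stdlib Require Import Reals List Lra Lia Classical ClassicalEpsilon FunctionalExtensionality PropExtensionality.
Open Scope R_scope.

Section S.
Variable X : Type.
Variable d : X -> X -> R.
Hypothesis Hm : is_metric X d.

Lemma set_ext (A B : X -> Prop) : (forall x, A x <-> B x) -> A = B.
Proof. intros H; apply functional_extensionality; intros x; apply propositional_extensionality; auto. Qed.

Lemma borel_open U : Defs.open_set X d U -> borel X d U.
Proof. intros HU S HS HO; auto. Qed.

Lemma borel_compl A : borel X d A -> borel X d (fun x => ~ A x).
Proof. intros HA S HS HO. pose proof HS as [_ [Hc _]]. apply Hc, HA; auto. Qed.

Lemma borel_True : borel X d (fun _ => True).
Proof. intros S HS HO. apply HS. Qed.

Lemma borel_cunion (A : nat -> X -> Prop) : (forall n, borel X d (A n)) ->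
  borel X d (fun x => exists n, A n x).
Proof. intros HA S HS HO. pose proof HS as [_ [_ Hu]]. apply Hu. intros n; apply HA; auto. Qed.

Lemma borel_empty : borel X d (fun _ => False).
Proof.
  replace (fun _ : X => False) with (fun x : X => ~ (fun _ => True) x).
  apply borel_compl, borel_True. apply set_ext; tauto.
Qed.

Lemma borel_union A B : borel X d A -> borel X d B -> borel X d (fun x => A x \/ B x).
Proof.
  intros HA HB.
  replace (fun x => A x \/ B x) with (fun x => exists n, (match n with 0%nat => A | _ => B end) x).
  apply borel_cunion. intros [|n]; auto.
  apply set_ext; intros x; split.
  - intros [[|n] H]; auto.
  - intros [H|H]; [exists 0%nat|exists 1%nat]; auto.
Qed.

Lemma borel_inter A B : borel X d A -> borel X d B -> borel X d (fun x => A x /\ B x).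
Proof.
  intros HA HB.
  replace (fun x => A x /\ B x) with (fun x => ~ (fun y => (fun z => ~ A z) y \/ (fun z => ~ B z) y) x).
  apply borel_compl, borel_union; apply borel_compl; auto.
  apply set_ext; intros x; simpl; tauto.
Qed.

Lemma const_zero c : (forall eps, eps > 0 -> Rabs c < eps) -> c = 0.
Proof.
  intros H. destruct (Req_dec c 0) as [|Hc]; auto.
  assert (Rabs c > 0) by (apply Rabs_pos_lt; auto).
  specialize (H (Rabs c / 2) ltac:(lra)). lra.
Qed.

Lemma infsum_const c l : infinite_sum (fun _ => c) l -> c = 0.
Proof.
  intros H. apply const_zero. intros eps He.
  destruct (H (eps/2) ltac:(lra)) as [N HN].
  specialize (HN N ltac:(lia)) as H1. specialize (HN (S N) ltac:(lia)) as H2.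
  unfold Rdist in *. simpl in H2.
  replace c with ((sum_f_R0 (fun _ => c) N + c - l) - (sum_f_R0 (fun _ => c) N - l)) by ring.
  eapply Rle_lt_trans. apply Rabs_triang. rewrite Rabs_Ropp. lra.
Qed.

Lemma infsum_eventually a l c : infinite_sum a l -> (forall k, sum_f_R0 a (S k) = c) -> l = c.
Proof.
  intros H Hc. apply Rminus_diag_uniq. apply const_zero. intros eps He.
  destruct (H eps He) as [N HN]. specialize (HN (S N) ltac:(lia)).
  unfold Rdist in HN. rewrite Hc in HN. rewrite Rabs_minus_sym. auto.
Qed.

Section Meas.
Variable m : (X -> Prop) -> R.
Hypothesis Hp : is_prob_measure X d m.

Lemma m_empty : m (fun _ => False) = 0.
Proof.
  destruct Hp as [_ [_ Hs]].
  specialize (Hs (fun _ _ => False) (fun _ => borel_empty) ltac:(intros; tauto)).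
  simpl in Hs. apply infsum_const in Hs. exact Hs.
Qed.

Lemma m_add2 A B : borel X d A -> borel X d B -> (forall x, A x -> B x -> False) ->
  m (fun x => A x \/ B x) = m A + m B.
Proof.
  intros HA HB HAB. destruct Hp as [_ [_ Hs]].
  set (F := fun n => match n with 0%nat => A | 1%nat => B | _ => fun _ : X => False end).
  assert (HF : forall n, borel X d (F n)) by (intros [|[|n]]; simpl; auto using borel_empty).
  assert (Hd : forall i j x, i <> j -> F i x -> F j x -> False).
  { intros i j x Hij Hi Hj; destruct i as [|[|i]]; destruct j as [|[|j]]; simpl in *;
    first [exact (HAB x Hi Hj) | exact (HAB x Hj Hi) | exact Hi | exact Hj | (exfalso; apply Hij; reflexivity)]. }
  specialize (Hs F HF Hd).
  replace (fun x => exists n, F n x) with (fun x => A x \/ B x) in Hs.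
  2:{ apply set_ext; intros x; split.
      - intros [H|H]; [exists 0%nat|exists 1%nat]; auto.
      - intros [[|[|n]] H]; simpl in H; auto; contradiction. }
  apply (infsum_eventually _ _ _ Hs).
  induction k. simpl. reflexivity.
  replace (sum_f_R0 (fun n => m (F n)) (S (S k))) with (sum_f_R0 (fun n => m (F n)) (S k) + m (fun _ => False)) by reflexivity.
  rewrite IHk, m_empty. ring.
Qed.

Lemma m_mono A B : borel X d A -> borel X d B -> (forall x, A x -> B x) -> m A <= m B.
Proof.
  intros HA HB HAB.
  assert (HC : borel X d (fun x => B x /\ ~ A x)) by (apply borel_inter; auto using borel_compl).
  replace B with (fun x => A x \/ (fun y => B y /\ ~ A y) x).
  rewrite m_add2; auto. destruct Hp as [Hpos _]. specialize (Hpos _ HC). lra.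
  simpl; tauto.
  apply set_ext; intros x; simpl. split. intros [H|[H _]]; auto.
  intros H. destruct (classic (A x)); auto.
Qed.

Lemma m_le1 A : borel X d A -> m A <= 1.
Proof.
  intros HA. destruct Hp as [_ [H1 _]]. rewrite <- H1. apply m_mono; auto using borel_True.
Qed.

End Meas.

Definition dirac (u : X) (A : X -> Prop) : R :=
  if excluded_middle_informative (A u) then 1 else 0.

Lemma sum_zero a N : (forall k, a k = 0) -> sum_f_R0 a N = 0.
Proof. intros H; induction N; simpl; rewrite H; try rewrite IHN; ring. Qed.

Lemma dirac_prob u : is_prob_measure X d (dirac u).
Proof.
  split; [|split].
  - intros A _; unfold dirac; destruct excluded_middle_informative; lra.
  - unfold dirac; destruct excluded_middle_informative; tauto.
  - intros A _ Hd. destruct (classic (exists n, A n u)) as [[n0 Hn0]|Hn].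
    + assert (Hv : dirac u (fun x => exists n, A n x) = 1)
        by (unfold dirac; destruct excluded_middle_informative; [reflexivity| exfalso; eauto]).
      rewrite Hv.
      assert (Hk : forall k, dirac u (A k) = if Nat.eq_dec k n0 then 1 else 0).
      { intros k; unfold dirac; destruct excluded_middle_informative as [h|h];
        destruct (Nat.eq_dec k n0); subst; try tauto. exfalso; eapply Hd; eauto. }
      assert (HS : forall N, ((N < n0)%nat -> sum_f_R0 (fun k => dirac u (A k)) N = 0) /\
                             ((n0 <= N)%nat -> sum_f_R0 (fun k => dirac u (A k)) N = 1)).
      { induction N.
        - simpl; rewrite Hk; destruct (Nat.eq_dec 0 n0); split; intros; try lia; reflexivity.
        - destruct IHN as [I1 I2]. simpl. rewrite Hk.
          destruct (Nat.eq_dec (S N) n0); split; intros; try lia.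
          + rewrite I1 by lia; ring.
          + rewrite I1 by lia; ring.
          + rewrite I2 by lia; ring. }
      intros eps He. exists n0. intros n Hn. rewrite (proj2 (HS n)) by lia.
      unfold Rdist. replace (1-1) with 0 by ring. rewrite Rabs_R0; lra.
    + assert (Hv : dirac u (fun x => exists n, A n x) = 0)
        by (unfold dirac; destruct excluded_middle_informative; [exfalso; eauto|reflexivity]).
      rewrite Hv. intros eps He. exists 0%nat. intros n _. rewrite sum_zero.
      unfold Rdist. replace (0-0) with 0 by ring. rewrite Rabs_R0; lra.
      intros k. unfold dirac; destruct excluded_middle_informative; [exfalso; eauto|reflexivity].
Qed.

Definition nu (v w : X) (A : X -> Prop) : R := (dirac v A + dirac w A) / 2.

Lemma sum_avg a b N : sum_f_R0 (fun n => (a n + b n) / 2) N = (sum_f_R0 a N + sum_f_R0 b N) / 2.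
Proof. induction N; simpl; try rewrite IHN; field. Qed.

Lemma nu_prob v w : is_prob_measure X d (nu v w).
Proof.
  destruct (dirac_prob v) as [P1 [Q1 R1]]. destruct (dirac_prob w) as [P2 [Q2 R2]].
  split; [|split]; unfold nu.
  - intros A HA; specialize (P1 A HA); specialize (P2 A HA); lra.
  - rewrite Q1, Q2; lra.
  - intros A HA Hd. specialize (R1 A HA Hd). specialize (R2 A HA Hd).
    intros eps He. destruct (R1 eps He) as [N1 H1]. destruct (R2 eps He) as [N2 H2].
    exists (max N1 N2). intros n Hn. specialize (H1 n ltac:(lia)). specialize (H2 n ltac:(lia)).
    rewrite sum_avg. unfold Rdist in *. revert H1 H2.
    unfold Rabs; repeat destruct Rcase_abs; lra.
Qed.

Lemma dist_sym x y : d x y = d y x.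
Proof. apply Hm. Qed.
Lemma dist_tri x y z : d x z <= d x y + d y z.
Proof. apply Hm. Qed.
Lemma dist_pos x y : 0 <= d x y.
Proof. apply Hm. Qed.
Lemma dist_refl x : d x x = 0.
Proof. apply Hm. reflexivity. Qed.

Lemma nbhd_open A e : Defs.open_set X d (nbhd X d A e).
Proof.
  intros x [a [Ha Hxa]]. exists (e - d x a). split; [lra|].
  intros y Hy. exists a; split; auto.
  pose proof (dist_tri y x a). rewrite (dist_sym y x) in H. lra.
Qed.

Lemma nbhd_nbhd A e1 e2 x : nbhd X d (nbhd X d A e1) e2 x -> nbhd X d A (e1 + e2) x.
Proof.
  intros [y [[a [Ha Hya]] Hxy]]. exists a; split; auto.
  pose proof (dist_tri x y a). lra.
Qed.

Lemma adm_trans a b c e1 e2 : is_prob_measure X d a -> is_prob_measure X d c ->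
  prohorov_adm X d a b e1 -> prohorov_adm X d b c e2 -> prohorov_adm X d a c (e1 + e2).
Proof.
  intros Pa Pc [He1 H1] [He2 H2]. split; [lra|]. intros A HA.
  pose proof (borel_open _ (nbhd_open A e1)) as B1.
  pose proof (borel_open _ (nbhd_open A e2)) as B2.
  pose proof (borel_open _ (nbhd_open A (e1+e2))) as B12.
  destruct (H1 A HA) as [a1 a2]. destruct (H2 A HA) as [c1 c2].
  destruct (H2 _ B1) as [d1 _]. destruct (H1 _ B2) as [_ d2].
  split.
  - assert (c (nbhd X d (nbhd X d A e1) e2) <= c (nbhd X d A (e1+e2))).
    { apply m_mono; auto. apply borel_open, nbhd_open. apply nbhd_nbhd. }
    lra.
  - assert (a (nbhd X d (nbhd X d A e2) e1) <= a (nbhd X d A (e1+e2))).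
    { apply m_mono; auto. apply borel_open, nbhd_open. rewrite Rplus_comm. apply nbhd_nbhd. }
    lra.
Qed.

Lemma adm_refl a e : is_prob_measure X d a -> 0 < e -> prohorov_adm X d a a e.
Proof.
  intros Pa He. split; auto. intros A HA.
  assert (a A <= a (nbhd X d A e)).
  { apply m_mono; auto. apply borel_open, nbhd_open. intros x Hx; exists x; split; auto.
    rewrite dist_refl; lra. }
  lra.
Qed.

Definition ballM (m0 : (X -> Prop) -> R) (r : R) := fun m => prohorov_lt X d m0 m r.

Lemma ballM_open m0 r : is_prob_measure X d m0 -> open_M X d (ballM m0 r).
Proof.
  intros P0 m Pm [e [He Her]]. exists (r - e). split; [lra|].
  intros m' Pm' [e' [He' He'r]]. exists (e + e'). split; [|lra].
  eapply adm_trans; eauto.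
Qed.

Lemma ballM_ne m0 r : is_prob_measure X d m0 -> 0 < r -> nonempty_M X d (ballM m0 r).
Proof.
  intros P0 Hr. exists m0; split; auto. exists (r/2). split; [apply adm_refl; auto; lra|lra].
Qed.

Lemma single_borel u : borel X d (fun x => x = u).
Proof.
  replace (fun x => x = u) with (fun x => ~ (fun y => y <> u) x).
  apply borel_compl, borel_open.
  - intros x Hx. exists (d u x). split.
    + pose proof (dist_pos u x). destruct (Req_dec (d u x) 0) as [h|h].
      apply Hm in h; congruence. lra.
    + intros y Hy Hyu; subst. rewrite dist_sym in Hy; lra.
  - apply set_ext; intros x; simpl; split; [apply NNPP|auto].
Qed.

Lemma cont_open g O : continuous_map X d g -> Defs.open_set X d O -> Defs.open_set X d (fun x => O (g x)).
Proof.
  intros Hg HO x Hx. destruct (HO _ Hx) as [e [He HeO]].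
  destruct (Hg x e He) as [dl [Hdl Hd]]. exists dl; split; auto.
Qed.

Lemma comp_cont f : (forall n, (1 <= n)%nat -> continuous_map X d (f n)) ->
  forall n, continuous_map X d (comp_seq X f n).
Proof.
  intros Hf n. induction n.
  - intros x e He. exists e; split; auto.
  - intros x e He. simpl. destruct (Hf (S n) ltac:(lia) (comp_seq X f n x) e He) as [d1 [Hd1 H1]].
    destruct (IHn x d1 Hd1) as [d2 [Hd2 H2]]. exists d2; split; auto.
Qed.

End S.

Lemma hit X d (Hm : is_metric X d) (m : (X -> Prop) -> R) (g : X -> X) u v e1 e2 :
  is_prob_measure X d m -> continuous_map X d g -> e1 < 1/4 -> e2 < 1/4 ->
  1 <= m (nbhd X d (fun x => x = u) e1) + e1 ->
  1/2 <= m (fun x => nbhd X d (fun y => y = v) e2 (g x)) + e2 ->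
  exists x, d x u < e1 /\ d (g x) v < e2.
Proof.
  intros Pm Hg He1 He2 H1 H2.
  destruct (classic (exists x, nbhd X d (fun x => x = u) e1 x /\ nbhd X d (fun y => y = v) e2 (g x))) as [[x [[a [-> Ha]] [b [-> Hb]]]]|Hn].
  - exists x; auto.
  - exfalso.
    assert (B1 := borel_open X d _ (nbhd_open X d Hm (fun x => x = u) e1)).
    assert (B2 := borel_open X d _ (cont_open X d g _ Hg (nbhd_open X d Hm (fun y => y = v) e2))).
    pose proof (m_add2 X d m Pm _ _ B1 B2 ltac:(intros x h1 h2; apply Hn; eauto)).
    pose proof (m_le1 X d m Pm _ (borel_union X d _ _ B1 B2)). lra.
Qed.

Theorem theorem3p4 (X : Type) (d : X -> X -> R) (f : nat -> X -> X)
  (Hmetric : is_metric X d) (Hcompact : compact_space X d)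
  (Hcont : forall n, (1 <= n)%nat -> continuous_map X d (f n))
  (Htrans : induced_transitive X d f) :
  banks_condition X d f.
Proof.
  intros U V W HU HV HW [u Hu] [v Hv] [w Hw].
  destruct (HU u Hu) as [ru [Hru HUr]]. destruct (HV v Hv) as [rv [Hrv HVr]].
  destruct (HW w Hw) as [rw [Hrw HWr]].
  set (r := Rmin (1/4) (Rmin ru (Rmin rv rw))).
  assert (Hr : 0 < r /\ r <= 1/4 /\ r <= ru /\ r <= rv /\ r <= rw).
  { unfold r, Rmin; repeat destruct Rle_dec; lra. }
  destruct (Htrans (ballM X d (dirac X u) r) (ballM X d (nu X v w) r)
    (ballM_open X d Hmetric _ r (dirac_prob X d u)) (ballM_open X d Hmetric _ r (nu_prob X d v w))
    (ballM_ne X d Hmetric _ r (dirac_prob X d u) ltac:(lra)) (ballM_ne X d Hmetric _ r (nu_prob X d v w) ltac:(lra)))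
    as [n [Hn [m [Pm [[e1 [[He1 A1] Her1]] [e2 [[He2 A2] Her2]]]]]]].
  pose proof (comp_cont X d f Hcont n) as Hg.
  destruct (A1 _ (single_borel X d Hmetric u)) as [Hu1 _].
  destruct (A2 _ (single_borel X d Hmetric v)) as [Hv1 _].
  destruct (A2 _ (single_borel X d Hmetric w)) as [Hw1 _].
  unfold push in Hv1, Hw1.
  assert (Du : dirac X u (fun x => x = u) = 1) by (unfold dirac; destruct excluded_middle_informative; tauto).
  assert (Dv : dirac X v (fun x => x = v) = 1) by (unfold dirac; destruct excluded_middle_informative; tauto).
  assert (Dw : dirac X w (fun x => x = w) = 1) by (unfold dirac; destruct excluded_middle_informative; tauto).
  assert (P1 := proj1 (dirac_prob X d w) _ (single_borel X d Hmetric v)).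
  assert (P2 := proj1 (dirac_prob X d v) _ (single_borel X d Hmetric w)).
  unfold nu in Hv1, Hw1.
  exists n; split; auto. split.
  - destruct (hit X d Hmetric m _ u v e1 e2 Pm Hg ltac:(lra) ltac:(lra) ltac:(lra) ltac:(lra)) as [x [h1 h2]].
    exists x; split; [apply HUr | apply HVr]; rewrite dist_sym; auto; lra.
  - destruct (hit X d Hmetric m _ u w e1 e2 Pm Hg ltac:(lra) ltac:(lra) ltac:(lra) ltac:(lra)) as [x [h1 h2]].
    exists x; split; [apply HUr | apply HWr]; rewrite dist_sym; auto; lra.
Qed.
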